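(* Let $\alpha_2\approx0.2797707433$ be the root in $[0,1]$ of $8\alpha^4-8\alpha^3+8\alpha^2=1/2$ and let $\alpha_2\le\alpha\le 1/3$. If $(x,y)\in A_2$ and $G_\alpha(x,y),G_\alpha^2(x,y)\in A_1$, then $G_\alpha^3(x,y)\in A_2$; i.e., a point coming from $A_2$ remains in $A_1$ for at most $2$ consecutive steps.
   Context: Let $\tau:[0,1]\to[0,1]$ be the symmetric tent map, $\tau(x)=2x$ for $0\le x<1/2$ and $\tau(x)=2-2x$ for $1/2\le x\le 1$. For $0<\alpha<1$ define $G_\alpha:[0,1]^2\to[0,1]^2$ by $G_\alpha(x,y)=(y,\tau(\alpha y+(1-\alpha)x))$. Let $S(x,y)=\alpha y+(1-\alpha)x$, $A_1=\{(x,y)\in[0,1]^2: S(x,y)<1/2\}$ and $A_2=\{(x,y)\in[0,1]^2: S(x,y)\ge 1/2\}$. *)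

(* Defs.v *)
From Stdlib Require Import Reals Lra.
Open Scope R_scope.

Definition tent (x : R) : R := if Rlt_dec x (1/2) then 2 * x else 2 - 2 * x.

Definition Sfun (alpha : R) (p : R * R) : R := alpha * snd p + (1 - alpha) * fst p.

Definition G (alpha : R) (p : R * R) : R * R := (snd p, tent (Sfun alpha p)).

Fixpoint Giter (alpha : R) (n : nat) (p : R * R) : R * R :=
  match n with
  | O => p
  | S k => G alpha (Giter alpha k p)
  end.

Definition in_unit_square (p : R * R) : Prop :=
  0 <= fst p <= 1 /\ 0 <= snd p <= 1.

Definition regionA1 (alpha : R) (p : R * R) : Prop := in_unit_square p /\ Sfun alpha p < 1/2.
Definition regionA2 (alpha : R) (p : R * R) : Prop := in_unit_square p /\ Sfun alpha p >= 1/2.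

(* Main.v *)
Require Import Defs.
From Stdlib Require Import Reals.
From Stdlib Require Import Lra Psatz.
Open Scope R_scope.

Lemma f_mono (a b : R) : 0 <= b -> b <= a -> a <= 1/3 ->
  8 * b ^ 4 - 8 * b ^ 3 + 8 * b ^ 2 <= 8 * a ^ 4 - 8 * a ^ 3 + 8 * a ^ 2.
Proof.
  intros Hb Hba Ha.
  assert (E : 8 * a ^ 4 - 8 * a ^ 3 + 8 * a ^ 2 - (8 * b ^ 4 - 8 * b ^ 3 + 8 * b ^ 2)
    = (a - b) * (8*(a^3+a^2*b+a*b^2+b^3) + 8*((a+b) - (a^2+a*b+b^2)))) by ring.
  assert (K : 0 <= 8*(a^3+a^2*b+a*b^2+b^3) + 8*((a+b) - (a^2+a*b+b^2))).
  { assert (0 <= a^3+a^2*b+a*b^2+b^3) by (simpl; nra).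
    assert (a^2 <= a/3) by (simpl; nra).
    assert (a*b <= a/3) by nra.
    assert (b^2 <= b/3) by (simpl; nra).
    lra. }
  assert (0 <= (a-b) * (8*(a^3+a^2*b+a*b^2+b^3) + 8*((a+b) - (a^2+a*b+b^2)))).
  { apply Rmult_le_pos; lra. }
  lra.
Qed.

Theorem proposition10 (alpha2 alpha x y : R) :
  0 <= alpha2 <= 1 ->
  8 * alpha2 ^ 4 - 8 * alpha2 ^ 3 + 8 * alpha2 ^ 2 = 1/2 ->
  alpha2 <= alpha <= 1/3 ->
  regionA2 alpha (x, y) ->
  regionA1 alpha (Giter alpha 1%nat (x, y)) ->
  regionA1 alpha (Giter alpha 2%nat (x, y)) ->
  regionA2 alpha (Giter alpha 3%nat (x, y)).
Proof.
  intros H2 Hf Ha HA0 HA1 HA2.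
  pose proof (f_mono alpha alpha2 ltac:(lra) ltac:(lra) ltac:(lra)) as Hm.
  unfold regionA1, regionA2, in_unit_square, Giter, G, Sfun in *; simpl in *.
  set (a := alpha) in *.
  destruct HA0 as [[[Hx0 Hx1] [Hy0 Hy1]] HS0].
  unfold tent in *.
  destruct (Rlt_dec (a * y + (1 - a) * x) (1/2)) as [C0|C0]; [lra|].
  set (z1 := 2 - 2 * (a * y + (1 - a) * x)) in *.
  destruct HA1 as [[_ [Hz10 Hz11]] HS1].
  destruct (Rlt_dec (a * z1 + (1 - a) * y) (1/2)) as [C1|C1]; [|lra].
  set (z2 := 2 * (a * z1 + (1 - a) * y)) in *.
  destruct HA2 as [[_ [Hz20 Hz21]] HS2].
  destruct (Rlt_dec (a * z2 + (1 - a) * z1) (1/2)) as [C2|C2]; [|lra].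
  set (z3 := 2 * (a * z2 + (1 - a) * z1)) in *.
  assert (Hz1 : z1 >= 2*a*(1-y)).
  { unfold z1. assert ((1-a)*x <= (1-a)*1) by (apply Rmult_le_compat_l; lra). lra. }
  assert (E : a * z3 + (1 - a) * z2 =
     (4*a^2-2*a+2)*(a*z1+(1-a)*y) + 2*a*(1-a)*z1) by (unfold z3, z2; ring).
  set (c := 4*a^2-2*a+2) in *.
  set (d := c*a + 2*a*(1-a)).
  assert (Hc : 0 <= c) by (unfold c; simpl; nra).
  assert (Hd : 0 <= d) by (unfold d; apply Rplus_le_le_0_compat; apply Rmult_le_pos; lra).
  assert (E2 : a * z3 + (1 - a) * z2 = d * z1 + c*(1-a)*y) by (rewrite E; unfold d; ring).
  assert (L1 : d * z1 >= d * (2*a*(1-y))) by (apply Rle_ge, Rmult_le_compat_l; lra).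
  assert (Y0 : d * (2*a) >= 1/2).
  { unfold d, c. simpl in Hm. replace (((4 * a ^ 2 - 2 * a + 2) * a + 2 * a * (1 - a)) * (2 * a))
      with (8 * a ^ 4 - 8 * a ^ 3 + 8 * a ^ 2) by (simpl; ring). simpl. lra. }
  assert (Y1 : c*(1-a) >= 1/2).
  { assert (4*a^2 >= 0) by (simpl; nra). assert (c*(1-a) >= (-2*a+2)*(1-a)) by (apply Rle_ge, Rmult_le_compat_r; unfold c; lra). assert ((-2*a+2)*(1-a) >= 1/2) by nra. lra. }
  assert (0 <= a * z2 + (1 - a) * z1).
  { apply Rplus_le_le_0_compat; apply Rmult_le_pos; lra. }
  split; [split; [lra | unfold z3; lra] |].
  rewrite E2.
  assert (d * (2*a*(1-y)) = (d*(2*a))*(1-y)) by ring.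
  assert ((d*(2*a))*(1-y) >= (1/2)*(1-y)) by (apply Rle_ge, Rmult_le_compat_r; lra).
  assert (c*(1-a)*y >= (1/2)*y) by (apply Rle_ge, Rmult_le_compat_r; lra).
  lra.
Qed.
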